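(* Under the standing assumptions below, the operator $P:Y\to Y$ satisfies $P^2=I$.
   Context: $X$ is one of $\ell^p$ ($1\le p\le\infty$), $c$, $c_0$. Standing assumptions: $(a_n)$ strictly decreasing positive reals, $a_n\to0$; $b=(b_n)\in X$ with $b_n>0$ for all $n$; $\pi_n:=2\prod_{m\ge1,\,m\ne n}\frac{1+a_m/a_n}{1-a_m/a_n}$ and $\pi\in\ell^\infty$; $\phi_{ij}:=\frac{b_i/b_j}{1+a_i/a_j}$ satisfies $\phi_{ij}\le C\mu^{|i-j|}$ for some $C>0$, $\mu\in(0,1)$. $Y:=\{(y_n)\mid(b_ny_n)\in X\}$ with $\|y\|_Y:=\|(b_ny_n)\|_X$. $P:Y\to Y$ is $(Py)_n:=\sum_{m=1}^\infty\frac{a_m\pi_my_m}{a_n+a_m}$ (matrix entries $P_{ij}=\frac{a_j\pi_j}{a_i+a_j}$); it is a bounded operator on $Y$. *)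

(* Defs.v *)
From Stdlib Require Import Reals Lra Lia.
From Coquelicot Require Import Coquelicot.
Open Scope R_scope.

(* Sequences are indexed by nat starting at 0 (the paper's index n >= 1
   corresponds to index n-1 here). *)

Inductive seq_space : Type :=
  | Sp_lp (p : R)
  | Sp_linf
  | Sp_c
  | Sp_c0.

Definition valid_space (X : seq_space) : Prop :=
  match X with Sp_lp p => 1 <= p | _ => True end.

(* |x|^p for real p >= 1, with the convention 0^p = 0 *)
Definition abs_pow (x p : R) : R :=
  if Req_EM_T x 0 then 0 else Rpower (Rabs x) p.

Definition in_space (X : seq_space) (x : nat -> R) : Prop :=
  match X with
  | Sp_lp p => ex_series (fun n => abs_pow (x n) p)
  | Sp_linf => exists M : R, forall n, Rabs (x n) <= M
  | Sp_c => ex_finite_lim_seq x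
  | Sp_c0 => is_lim_seq x 0
  end.

Definition in_Y (X : seq_space) (b y : nat -> R) : Prop :=
  in_space X (fun n => b n * y n).

Fixpoint pi_pprod (a : nat -> R) (n N : nat) : R :=
  match N with
  | O => 1
  | S k => pi_pprod a n k *
           (if Nat.eqb k n then 1 else (1 + a k / a n) / (1 - a k / a n))
  end.

Definition pi_seq (a : nat -> R) (n : nat) : R :=
  2 * real (Lim_seq (pi_pprod a n)).

Definition phi (a b : nat -> R) (i j : nat) : R :=
  (b i / b j) / (1 + a i / a j).

Definition Pmat (a : nat -> R) (i j : nat) : R :=
  a j * pi_seq a j / (a i + a j).

Definition Pop (a y : nat -> R) (n : nat) : R :=
  Series (fun m => Pmat a n m * y m).

(* Main.v *)
Require Import Defs.
From Stdlib Require Import Reals.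
From Coquelicot Require Import Coquelicot.
From Stdlib Require Import Lra Lia.
Open Scope R_scope.

Fixpoint ssum (f : nat -> R) (N : nat) : R :=
  match N with O => 0 | S k => ssum f k + f k end.
Fixpoint prodF (f : nat -> R) (N : nat) : R :=
  match N with O => 1 | S k => prodF f k * f k end.
Fixpoint prodEx (f : nat -> R) (m N : nat) : R :=
  match N with O => 1 | S k => prodEx f m k * (if Nat.eqb k m then 1 else f k) end.

Lemma ssum_ext f g N : (forall m, (m < N)%nat -> f m = g m) -> ssum f N = ssum g N.
Proof. induction N; simpl; intros H; [reflexivity|]. rewrite IHN by (intros; apply H; lia).
  rewrite H by lia. reflexivity. Qed.

Lemma ssum_lin3 p q r f g h N :
  ssum (fun m => p * f m + q * g m + r * h m) N = p * ssum f N + q * ssum g N + r * ssum h N.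
Proof. induction N; simpl; [ring|]. rewrite IHN. ring. Qed.

Lemma prodEx_ge f m N : (N <= m)%nat -> prodEx f m N = prodF f N.
Proof. induction N; simpl; intros H; [reflexivity|].
  replace (Nat.eqb N m) with false by (symmetry; apply Nat.eqb_neq; lia).
  rewrite IHN by lia. reflexivity. Qed.

Lemma prodEx_ext f g m N : (forall l, (l < N)%nat -> l <> m -> f l = g l) ->
  prodEx f m N = prodEx g m N.
Proof. induction N; simpl; intros H; [reflexivity|].
  rewrite IHN by (intros; apply H; lia).
  destruct (Nat.eqb_spec N m); [reflexivity|]. rewrite H by lia. reflexivity. Qed.

Lemma PF (al ga a : nat -> R) (N : nat) :
  (forall i j, (i < N)%nat -> (j < N)%nat -> i <> j -> a i <> a j) ->
  forall z, (forall l, (l < N)%nat -> z <> a l) ->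
  prodF (fun l => al l + ga l / (z - a l)) N =
  prodF al N + ssum (fun m => ga m * prodEx (fun l => al l + ga l / (a m - a l)) m N / (z - a m)) N.
Proof.
  induction N as [|N IH]; intros Ha z Hz; simpl; [ring|].
  assert (Ha' : forall i j, (i < N)%nat -> (j < N)%nat -> i <> j -> a i <> a j)
    by (intros; apply Ha; lia).
  rewrite (IH Ha' z) by (intros; apply Hz; lia).
  pose proof (IH Ha' (a N)) as IHN.
  rewrite (prodEx_ge _ N N) by lia. rewrite Nat.eqb_refl.
  rewrite (ssum_ext (fun m => ga m * (prodEx (fun l => al l + ga l / (a m - a l)) m N *
       (if Nat.eqb N m then 1 else al N + ga N / (a m - a N))) / (z - a m)) (fun m => al N * (ga m * prodEx (fun l => al l + ga l / (a m - a l)) m N / (z - a m))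
     + (ga N / (z - a N)) * (ga m * prodEx (fun l => al l + ga l / (a m - a l)) m N / (z - a m))
     + (- (ga N / (z - a N))) * (ga m * prodEx (fun l => al l + ga l / (a m - a l)) m N / (a N - a m)))).
  2:{ intros m Hm. replace (Nat.eqb N m) with false by (symmetry; apply Nat.eqb_neq; lia).
      assert (z - a m <> 0) by (specialize (Hz m ltac:(lia)); lra).
      assert (z - a N <> 0) by (specialize (Hz N ltac:(lia)); lra).
      assert (a N - a m <> 0) by (specialize (Ha N m ltac:(lia) ltac:(lia) ltac:(lia)); lra).
      assert (a m - a N <> 0) by lra.
      field. repeat split; auto. }
  rewrite ssum_lin3. rewrite IHN by (intros l Hl; apply Ha; lia).
  unfold Rdiv. ring.
Qed.

Lemma prodF_zero f j N : (j < N)%nat -> f j = 0 -> prodF f N = 0.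
Proof. induction N; simpl; intros H1 H2; [lia|].
  destruct (Nat.eq_dec j N) as [->|]. rewrite H2; ring. rewrite IHN by (auto; lia). ring. Qed.

Lemma prodF_split f m N : (m < N)%nat -> prodF f N = prodEx f m N * f m.
Proof. induction N; simpl; intros H; [lia|].
  destruct (Nat.eqb_spec N m) as [->|Hn].
  - rewrite prodEx_ge by lia. ring.
  - rewrite IHN by lia. ring. Qed.

Lemma prodEx_mul f g m N : prodEx f m N * prodEx g m N = prodEx (fun l => f l * g l) m N.
Proof. induction N; simpl; [ring|]. rewrite <- IHN. destruct (Nat.eqb N m); ring. Qed.

Lemma prodEx_one m N : prodEx (fun _ => 1) m N = 1.
Proof. induction N; simpl; [ring|]. rewrite IHN. destruct (Nat.eqb N m); ring. Qed.

Lemma prodEx_mod f g m n N : (n < N)%nat -> n <> m -> (forall l, l <> n -> f l = g l) -> f n <> 0 ->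
  prodEx g m N = prodEx f m N / f n * g n.
Proof. induction N; intros H1 H2 H3 H4; [lia|]. simpl.
  destruct (Nat.eq_dec N n) as [->|Hn].
  - replace (Nat.eqb n m) with false by (symmetry; apply Nat.eqb_neq; auto).
    rewrite (prodEx_ext g f) by (intros; symmetry; apply H3; lia). field. auto.
  - rewrite IHN by (auto; lia). destruct (Nat.eqb N m); [field; auto|].
    rewrite (H3 N) by auto. field; auto. Qed.

Lemma strict_dec (a : nat -> R) : (forall n, a (S n) < a n) -> forall i j, (i < j)%nat -> a j < a i.
Proof. intros H i j Hij. induction Hij. apply H. specialize (H m). lra. Qed.

Lemma a_inj (a : nat -> R) : (forall n, a (S n) < a n) -> forall i j, i <> j -> a i <> a j.
Proof. intros H i j Hij. destruct (Nat.lt_gt_cases i j) as [[h|h] _]; auto.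
  pose proof (strict_dec a H i j h); lra. pose proof (strict_dec a H j i h); lra. Qed.

Lemma pi_pprod_eq a m N : 0 < a m -> (forall l, l <> m -> a l <> a m) ->
  pi_pprod a m N = prodEx (fun l => 1 + 2 * a l / (a m - a l)) m N.
Proof. intros Hm Hi. induction N; simpl; [reflexivity|]. rewrite IHN.
  destruct (Nat.eqb_spec N m); [reflexivity|]. f_equal.
  assert (a m - a N <> 0) by (specialize (Hi N n); lra).
  assert (1 - a N / a m <> 0).
  { intro E. apply (Hi N n). field_simplify in E; [|lra]. unfold Rdiv in E. 
    apply Rmult_integral in E. destruct E as [E|E]. lra. pose proof (Rinv_neq_0_compat (a m)). lra. }
  field. split; lra. Qed.

Definition wN (a : nat -> R) (N m : nat) := 2 * a m * pi_pprod a m N.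
Definition PN (a : nat -> R) (N i j : nat) := wN a N j / (a i + a j).

Lemma finite_id (a : nat -> R) (ha_pos : forall n, 0 < a n) (ha_dec : forall n, a (S n) < a n)
  N n k : (n < N)%nat -> (k < N)%nat ->
  ssum (fun m => PN a N n m * PN a N m k) N = if Nat.eqb n k then 1 else 0.
Proof.
  intros Hn Hk.
  pose (alB := fun l => if Nat.eqb l n then 0 else 1).
  pose (gaB := fun l => if Nat.eqb l n then 1 else 2 * a l).
  assert (Hinj := a_inj a ha_dec).
  pose proof (PF alB gaB a N (fun i j _ _ h => Hinj i j h) (- a k)) as H.
  specialize (H ltac:(intros l _; pose proof (ha_pos l); pose proof (ha_pos k); lra)).
  rewrite (prodF_zero alB n) in H by (auto; unfold alB; rewrite Nat.eqb_refl; auto).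
  rewrite (ssum_ext _ (fun m => wN a N m / (a m + a n) / (- a k - a m))) in H.
  2:{ intros m Hm. f_equal. unfold wN. rewrite pi_pprod_eq by (auto; intros; apply Hinj; auto).
      destruct (Nat.eq_dec m n) as [->|Hmn].
      - unfold gaB. rewrite Nat.eqb_refl.
        rewrite (prodEx_ext _ (fun l => 1 + 2 * a l / (a n - a l))).
        2:{ intros l _ Hl. unfold alB, gaB. replace (Nat.eqb l n) with false by (symmetry; apply Nat.eqb_neq; auto). ring. }
        pose proof (ha_pos n). field. lra.
      - pose proof (ha_pos n). pose proof (ha_pos m). pose proof (Hinj m n Hmn).
        assert (Hf : forall l, l <> n -> 1 + 2 * a l / (a m - a l) = alB l + gaB l / (a m - a l)).
        { intros l Hl. unfold alB, gaB. replace (Nat.eqb l n) with false by (symmetry; apply Nat.eqb_neq; auto). ring. }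
        assert (Hnz : 1 + 2 * a n / (a m - a n) <> 0).
        { replace (1 + 2 * a n / (a m - a n)) with ((a m + a n) / (a m - a n)) by (field; lra).
          intro E. unfold Rdiv in E. apply Rmult_integral in E. destruct E as [E|E]; [lra|].
          revert E. apply Rinv_neq_0_compat. lra. }
        rewrite (prodEx_mod (fun l => 1 + 2 * a l / (a m - a l)) _ m n N Hn (not_eq_sym Hmn) Hf Hnz).
        unfold alB, gaB. rewrite Nat.eqb_refl.
        replace (Nat.eqb m n) with false by (symmetry; apply Nat.eqb_neq; auto).
        replace (1 + 2 * a n / (a m - a n)) with ((a m + a n) / (a m - a n)) by (field; lra).
        field. repeat split; lra. }
  rewrite (ssum_ext _ (fun m => (- wN a N k) * (wN a N m / (a m + a n) / (- a k - a m)))).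
  2:{ intros m Hm. unfold PN. pose proof (ha_pos n). pose proof (ha_pos m). pose proof (ha_pos k).
      field. repeat split; lra. }
  assert (Hs : forall c f, ssum (fun m => c * f m) N = c * ssum f N).
  { intros c f. clear. induction N; simpl; [ring|]. rewrite IHN; ring. }
  rewrite Hs. rewrite Rplus_0_l in H. rewrite <- H.
  destruct (Nat.eqb_spec n k) as [<-|Hnk].
  - rewrite (prodF_split _ n N Hn). unfold alB at 2, gaB at 2. rewrite Nat.eqb_refl.
    rewrite (prodEx_ext _ (fun l => 1 + 2 * a l / (- a n - a l))).
    2:{ intros l _ Hl. unfold alB, gaB. replace (Nat.eqb l n) with false by (symmetry; apply Nat.eqb_neq; auto). ring. }
    unfold wN. rewrite pi_pprod_eq by (auto; intros; apply Hinj; auto).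
    assert (E : prodEx (fun l => 1 + 2 * a l / (a n - a l)) n N * prodEx (fun l => 1 + 2 * a l / (- a n - a l)) n N = 1).
    { rewrite prodEx_mul. transitivity (prodEx (fun _ => 1) n N); [|apply prodEx_one]. apply prodEx_ext.
      intros l _ Hl. pose proof (ha_pos n). pose proof (ha_pos l). pose proof (Hinj n l (not_eq_sym Hl)).
      cbv beta. field. split; lra. }
    pose proof (ha_pos n).
    replace (- (2 * a n * prodEx (fun l => 1 + 2 * a l / (a n - a l)) n N) *
       (prodEx (fun l => 1 + 2 * a l / (- a n - a l)) n N * (0 + 1 / (- a n - a n))))
      with (prodEx (fun l => 1 + 2 * a l / (a n - a l)) n N * prodEx (fun l => 1 + 2 * a l / (- a n - a l)) n N)
      by (field; lra).
    exact E.
  - rewrite (prodF_zero _ k N Hk). ring.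
    unfold alB, gaB. replace (Nat.eqb k n) with false by (symmetry; apply Nat.eqb_neq; auto).
    pose proof (ha_pos k). field. lra.
Qed.
Lemma sum_n_ssum f K : sum_n f K = ssum f (S K).
Proof. induction K. rewrite sum_O. simpl. rewrite Rplus_0_l. reflexivity. rewrite sum_Sn, IHK. simpl. reflexivity. Qed.

Lemma ssum_scal c f N : ssum (fun k => c * f k) N = c * ssum f N.
Proof. induction N; simpl; [ring|]. rewrite IHN; ring. Qed.

Lemma ssum_zero N : ssum (fun _ => 0) N = 0.
Proof. induction N; simpl; [ring|]. rewrite IHN; ring. Qed.

Lemma ssum_abs f N : Rabs (ssum f N) <= ssum (fun k => Rabs (f k)) N.
Proof. induction N; simpl. rewrite Rabs_R0; lra.
  eapply Rle_trans. apply Rabs_triang. lra. Qed.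

Lemma ssum_le f g N : (forall k, (k < N)%nat -> f k <= g k) -> ssum f N <= ssum g N.
Proof. induction N; simpl; intros H; [lra|]. pose proof (H N ltac:(lia)).
  pose proof (IHN ltac:(intros; apply H; lia)). lra. Qed.

Lemma ssum_tail f c M K : (M <= K)%nat -> (forall k, (M <= k)%nat -> f k <= c k) ->
  ssum f K <= ssum f M + (ssum c K - ssum c M).
Proof. intros HMK H. induction HMK; [lra|]. simpl. pose proof (H m ltac:(lia)).
  lra. Qed.

Lemma ssum_stable v M K : (M <= K)%nat -> (forall k, (M <= k)%nat -> v k = 0) -> ssum v K = ssum v M.
Proof. intros HMK Hv. induction HMK; [reflexivity|]. simpl. rewrite IHHMK, Hv by lia. ring. Qed.

Lemma ex_series_bound (f E : nat -> R) : (forall k, Rabs (f k) <= E k) -> ex_series E -> ex_series f.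
Proof. intros H HE. apply (ex_series_le f E); auto. Qed.

Lemma is_series_fin v M : (forall k, (M <= k)%nat -> v k = 0) -> is_series v (ssum v M).
Proof. intros H. change (is_lim_seq (sum_n v) (ssum v M)).
  apply (is_lim_seq_ext_loc (fun _ => ssum v M)); [|apply is_lim_seq_const].
  exists M. intros K HK. rewrite sum_n_ssum. symmetry. apply ssum_stable; auto. Qed.

Lemma ssum_lim (F : nat -> nat -> R) (l : nat -> R) M : (forall k, is_lim_seq (fun N => F N k) (l k)) ->
  is_lim_seq (fun N => ssum (F N) M) (ssum l M).
Proof. intros H. induction M; simpl. apply is_lim_seq_const.
  apply is_lim_seq_plus'; [exact IHM | apply H]. Qed.

Lemma ssum_le_series E K : (forall k, 0 <= E k) -> ex_series E -> ssum E K <= Series E.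
Proof. intros H0 HE. pose proof (Series_correct E HE) as HS.
  assert (Hi : forall n, sum_n E n <= sum_n E (S n)) by (intros; rewrite sum_Sn; simpl; specialize (H0 (S n)); unfold plus; simpl; lra).
  pose proof (is_lim_seq_incr_compare (sum_n E) (Series E) HS Hi) as Hc.
  destruct K. simpl. specialize (Hc O). rewrite sum_O in Hc. specialize (H0 O). lra.
  rewrite <- sum_n_ssum. apply Hc. Qed.

Lemma dct (f : nat -> nat -> R) (g E : nat -> R) :
  (forall k, is_lim_seq (fun N => f N k) (g k)) -> (forall N k, Rabs (f N k) <= E k) -> ex_series E ->
  is_lim_seq (fun N => Series (f N)) (Series g).
Proof.
  intros Hl Hb HE.
  assert (Eg : forall k, Rabs (g k) <= E k).
  { intros k. pose proof (is_lim_seq_abs _ _ (Hl k)) as H1.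
    pose proof (is_lim_seq_le _ _ _ _ (fun N => Hb N k) H1 (is_lim_seq_const (E k))) as H2. exact H2. }
  assert (E0 : forall k, 0 <= E k) by (intros k; pose proof (Eg k); pose proof (Rabs_pos (g k)); lra).
  assert (Hfs : forall N, ex_series (f N)) by (intros N; apply (ex_series_bound _ E); auto).
  assert (Hgs : ex_series g) by (apply (ex_series_bound _ E); auto).
  assert (Hh : forall N k, Rabs (f N k - g k) <= 2 * E k).
  { intros N k. eapply Rle_trans. apply Rabs_triang. rewrite Rabs_Ropp. pose proof (Hb N k); pose proof (Eg k); lra. }
  assert (Hhs : forall N, ex_series (fun k => Rabs (f N k - g k))).
  { intros N. apply (ex_series_bound _ (fun k => 2 * E k)). intros k. rewrite Rabs_Rabsolu. apply Hh.
    apply (ex_series_scal_l 2 E HE). }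
  apply is_lim_seq_spec. intros eps.
  pose proof (Series_correct E HE) as HS. change (is_lim_seq (sum_n E) (Series E)) in HS.
  apply is_lim_seq_spec in HS.
  destruct (HS (pos_div_2 (pos_div_2 (pos_div_2 eps)))) as [K0 HK0].
  specialize (HK0 K0 (le_n _)). rewrite sum_n_ssum in HK0. simpl in HK0.
  set (M := S K0) in *.
  assert (Hz : forall k, is_lim_seq (fun N => Rabs (f N k - g k)) 0).
  { intros k. replace (Finite 0) with (Rbar_abs (Finite (g k - g k))) by (simpl; f_equal; rewrite Rminus_diag, Rabs_R0; reflexivity).
    apply is_lim_seq_abs. apply is_lim_seq_plus'. apply Hl. apply is_lim_seq_const. }
  pose proof (ssum_lim _ (fun _ => 0) M Hz) as HL. rewrite ssum_zero in HL.
  apply is_lim_seq_spec in HL. destruct (HL (pos_div_2 (pos_div_2 eps))) as [N0 HN0].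
  exists N0. intros N HN. specialize (HN0 N HN). simpl in HN0.
  rewrite <- Series_minus by auto.
  eapply Rle_lt_trans. apply Series_Rabs. apply (Hhs N).
  assert (Hbd : Series (fun k => Rabs (f N k - g k)) <=
     ssum (fun k => Rabs (f N k - g k)) M + 2 * (Series E - ssum E M)).
  { pose proof (Series_correct _ (Hhs N)) as HH. change (is_lim_seq (sum_n (fun k => Rabs (f N k - g k))) (Series (fun k => Rabs (f N k - g k)))) in HH.
    assert (Hev : eventually (fun K => sum_n (fun k => Rabs (f N k - g k)) K <=
        ssum (fun k => Rabs (f N k - g k)) M + 2 * (Series E - ssum E M))).
    { exists M. intros K HK. rewrite sum_n_ssum.
      eapply Rle_trans. apply (ssum_tail _ (fun k => 2 * E k) M (S K)). lia. intros; apply Hh.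
      rewrite !ssum_scal. pose proof (ssum_le_series E (S K) E0 HE). lra. }
    exact (is_lim_seq_le_loc _ _ _ _ Hev HH (is_lim_seq_const _)). }
  assert (Hp : 0 <= ssum (fun k => Rabs (f N k - g k)) M) by (rewrite <- (ssum_zero M); apply ssum_le; intros; apply Rabs_pos).
  apply Rabs_def2 in HN0.
  assert (Hq : 0 <= Series E - ssum E M) by (pose proof (ssum_le_series E M E0 HE); lra).
  apply Rabs_def2 in HK0.
  simpl in HN0, HK0. unfold M in *. simpl in *. lra.
Qed.

Lemma pow_le1 q n : 0 <= q <= 1 -> q ^ n <= 1.
Proof. intros H. induction n; simpl; [lra|]. pose proof (pow_le q n (proj1 H)). nra. Qed.

Lemma pow_anti q e1 e2 : 0 <= q <= 1 -> (e2 <= e1)%nat -> q ^ e1 <= q ^ e2.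
Proof. intros H He. replace e1 with ((e1 - e2) + e2)%nat by lia. rewrite pow_add.
  pose proof (pow_le1 q (e1 - e2) H). pose proof (pow_le q e2 (proj1 H)). nra. Qed.

Definition dd (i j : nat) := (Nat.max i j - Nat.min i j)%nat.

Lemma pow_dd q i j : 0 < q <= 1 -> q ^ dd i j <= q ^ j / q ^ i.
Proof. intros H. unfold dd. pose proof (pow_lt q i (proj1 H)). pose proof (pow_lt q j (proj1 H)).
  destruct (Compare_dec.le_lt_dec i j).
  - rewrite Nat.max_r, Nat.min_l by lia.
    replace (q ^ j) with (q ^ (j - i) * q ^ i) by (rewrite <- pow_add; f_equal; lia).
    right. field. lra.
  - rewrite Nat.max_l, Nat.min_r by lia.
    pose proof (pow_le1 q (i - j) ltac:(lra)). pose proof (pow_lt q (i - j) (proj1 H)).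
    replace (q ^ i) with (q ^ (i - j) * q ^ j) by (rewrite <- pow_add; f_equal; lia).
    replace (q ^ j / (q ^ (i - j) * q ^ j)) with (/ q ^ (i - j)) by (field; lra).
    apply Rle_trans with 1; auto. rewrite <- Rinv_1. apply Rinv_le_contravar; lra. Qed.

Lemma ex_series_geomc c q : 0 <= q < 1 -> ex_series (fun k => c * q ^ k).
Proof. intros H. apply (ex_series_scal_l c (fun k => q ^ k)). apply ex_series_geom. rewrite Rabs_pos_eq; lra. Qed.

Lemma ssum_geom q N : 0 <= q < 1 -> ssum (fun k => q ^ k) N <= / (1 - q).
Proof. intros H. rewrite <- Series_geom by (rewrite Rabs_pos_eq; lra).
  apply ssum_le_series. intros; apply pow_le; lra. apply ex_series_geom. rewrite Rabs_pos_eq; lra. Qed.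

Lemma ssum_ge_term f k N : (forall j, 0 <= f j) -> (k < N)%nat -> f k <= ssum f N.
Proof. intros H0. induction N; intros Hk; [lia|]. simpl.
  destruct (Nat.eq_dec k N) as [->|]. pose proof (ssum_le (fun _ => 0) f N ltac:(intros; auto)).
  rewrite ssum_zero in H. lra. pose proof (IHN ltac:(lia)). specialize (H0 N). lra. Qed.

Lemma ev_bdd (x : nat -> R) B N0 : (forall k, (N0 <= k)%nat -> Rabs (x k) <= B) ->
  exists K, 0 <= K /\ forall k, Rabs (x k) <= K.
Proof. intros H. exists (Rabs B + ssum (fun j => Rabs (x j)) N0). 
  assert (0 <= ssum (fun j => Rabs (x j)) N0) by (rewrite <- (ssum_zero N0); apply ssum_le; intros; apply Rabs_pos).
  split. pose proof (Rabs_pos B); lra.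
  intros k. destruct (Compare_dec.le_lt_dec N0 k). specialize (H k l). pose proof (Rle_abs B). lra.
  pose proof (ssum_ge_term (fun j => Rabs (x j)) k N0 (fun j => Rabs_pos _) l). pose proof (Rabs_pos B). lra. Qed.

Lemma lim_bdd (x : nat -> R) (l : R) : is_lim_seq x l -> exists K, 0 <= K /\ forall k, Rabs (x k) <= K.
Proof. intros H. apply is_lim_seq_spec in H. destruct (H (mkposreal 1 Rlt_0_1)) as [N0 HN].
  apply (ev_bdd x (Rabs l + 1) N0). intros k Hk. specialize (HN k Hk). simpl in HN.
  pose proof (Rabs_triang_inv (x k) l). lra. Qed.

Lemma in_space_bdd X x : valid_space X -> in_space X x -> exists K, 0 <= K /\ forall k, Rabs (x k) <= K.
Proof. destruct X; simpl; intros HX Hx.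
  - apply ex_series_lim_0 in Hx. apply is_lim_seq_spec in Hx. destruct (Hx (mkposreal 1 Rlt_0_1)) as [N0 HN].
    apply (ev_bdd x 1 N0). intros k Hk. specialize (HN k Hk). simpl in HN.
    unfold abs_pow in HN. destruct (Req_EM_T (x k) 0) as [E|E].
    + rewrite E, Rabs_R0. lra.
    + destruct (Rle_lt_dec (Rabs (x k)) 1) as [h|h]; auto. exfalso.
      pose proof (Rpower_lt (Rabs (x k)) 0 p h ltac:(lra)). rewrite Rpower_O in H by lra.
      rewrite Rminus_0_r, Rabs_pos_eq in HN. lra. unfold Rpower. left; apply exp_pos.
  - destruct Hx as [M HM]. exists (Rabs M). split. apply Rabs_pos. intros k. specialize (HM k). pose proof (Rle_abs M). lra.
  - destruct Hx as [l Hl]. apply (lim_bdd x l Hl).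
  - apply (lim_bdd x 0 Hx).
Qed.

Lemma pi_lim (a : nat -> R) m : ex_finite_lim_seq (pi_pprod a m) -> is_lim_seq (pi_pprod a m) (pi_seq a m / 2).
Proof. intros [l Hl]. unfold pi_seq. rewrite (is_lim_seq_unique _ _ Hl). simpl.
  replace (2 * l / 2) with l by field. exact Hl. Qed.

Lemma factor_ge1 (a : nat -> R) m l : 0 < a m -> 0 < a l -> a l <> a m ->
  1 <= Rabs ((1 + a l / a m) / (1 - a l / a m)).
Proof. intros Hm Hl Hne. set (x := a l / a m).
  assert (0 < x) by (unfold x; apply Rdiv_lt_0_compat; auto).
  assert (1 - x <> 0).
  { intro E. apply Hne. unfold x in E. field_simplify in E; [|lra].
    unfold Rdiv in E. apply Rmult_integral in E. destruct E as [E|E]; [lra|].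
    exfalso. revert E. apply Rinv_neq_0_compat. lra. }
  unfold Rdiv. rewrite Rabs_mult, Rabs_inv, (Rabs_pos_eq (1 + x)) by lra.
  assert (0 < Rabs (1 - x)) by (apply Rabs_pos_lt; auto).
  assert (Rabs (1 - x) <= 1 + x) by (apply Rabs_le; lra).
  apply (Rmult_le_reg_r (Rabs (1 - x))); auto. rewrite Rmult_assoc, Rinv_l by lra. lra. Qed.

Lemma pprod_bound (a : nat -> R) m N : (forall n, 0 < a n) -> (forall n, a (S n) < a n) ->
  ex_finite_lim_seq (pi_pprod a m) -> Rabs (2 * pi_pprod a m N) <= Rabs (pi_seq a m).
Proof. intros Hp Hd Hc.
  pose proof (is_lim_seq_abs _ _ (pi_lim a m Hc)) as H. simpl in H.
  assert (Hi : forall N, Rabs (pi_pprod a m N) <= Rabs (pi_pprod a m (S N))).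
  { intros K. simpl. destruct (Nat.eqb_spec K m). rewrite Rmult_1_r; lra.
    rewrite Rabs_mult. pose proof (factor_ge1 a m K (Hp m) (Hp K) (a_inj a Hd K m n)).
    pose proof (Rabs_pos (pi_pprod a m K)). nra. }
  pose proof (is_lim_seq_incr_compare _ _ H Hi N) as H2.
  rewrite Rabs_mult, (Rabs_pos_eq 2) by lra. unfold Rdiv in H2. rewrite Rabs_mult in H2.
  rewrite Rabs_inv, (Rabs_pos_eq 2) in H2 by lra. lra. Qed.

Lemma core_bd (a b : nat -> R) M0 C mu i j v : (forall n, 0 < a n) -> (forall n, 0 < b n) ->
  0 < mu <= 1 -> Rabs v <= M0 ->
  phi a b i j <= C * mu ^ dd i j ->
  Rabs (a j * v / (a i + a j)) <= M0 * C * mu ^ dd i j * b j / b i.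
Proof. intros Ha Hb Hmu Hv Hphi.
  pose proof (Ha i). pose proof (Ha j). pose proof (Hb i). pose proof (Hb j).
  assert (Hph : a j / (a i + a j) = phi a b i j * b j / b i) by (unfold phi; field; repeat split; lra).
  assert (0 <= phi a b i j) by (unfold phi; apply Rle_mult_inv_pos; [apply Rle_mult_inv_pos; lra|];
     pose proof (Rdiv_lt_0_compat (a i) (a j)); lra).
  pose proof (pow_dd mu i j Hmu).
  replace (a j * v / (a i + a j)) with (v * (a j / (a i + a j))) by (field; lra).
  rewrite Hph, Rabs_mult, (Rabs_pos_eq (phi a b i j * b j / b i))
    by (apply Rle_mult_inv_pos; [apply Rmult_le_pos|]; lra).
  assert (0 <= M0) by (pose proof (Rabs_pos v); lra).
  unfold Rdiv. 
  assert (0 <= b j * / b i) by (apply Rle_mult_inv_pos; lra).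
  assert (0 <= phi a b i j * b j * / b i) by (rewrite Rmult_assoc; apply Rmult_le_pos; lra).
  apply Rle_trans with (M0 * (phi a b i j * b j * / b i)). apply Rmult_le_compat_r; auto.
  rewrite !Rmult_assoc. apply Rmult_le_compat_l; auto. rewrite <- !Rmult_assoc.
  apply Rmult_le_compat_r; [apply Rlt_le, Rinv_0_lt_compat; lra|].
  apply Rmult_le_compat_r; [lra|]. unfold Rdiv in *. lra. Qed.

Lemma prod_bd (a b : nat -> R) M0 C mu n m k v1 v2 : (forall n, 0 < a n) -> (forall n, 0 < b n) ->
  0 < mu < 1 -> 0 < C -> (forall i j, phi a b i j <= C * mu ^ dd i j) ->
  Rabs v1 <= M0 -> Rabs v2 <= M0 ->
  Rabs (a m * v1 / (a n + a m) * (a k * v2 / (a m + a k))) <= (M0 * C * M0 * C * (b k / b n) / mu ^ n) * mu ^ m.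
Proof. intros Ha Hb Hmu HC Hphi H1 H2.
  pose proof (core_bd a b M0 C mu n m v1 Ha Hb ltac:(lra) H1 (Hphi n m)) as B1.
  pose proof (core_bd a b M0 C mu m k v2 Ha Hb ltac:(lra) H2 (Hphi m k)) as B2.
  rewrite Rabs_mult.
  pose proof (Hb n). pose proof (Hb m). pose proof (Hb k).
  assert (0 <= M0) by (pose proof (Rabs_pos v1); lra).
  pose proof (pow_lt mu (dd n m) ltac:(lra)). pose proof (pow_lt mu (dd m k) ltac:(lra)).
  pose proof (pow_lt mu n ltac:(lra)). pose proof (pow_lt mu m ltac:(lra)).
  eapply Rle_trans. apply Rmult_le_compat; try apply Rabs_pos; [exact B1 | exact B2].
  replace (M0 * C * mu ^ dd n m * b m / b n * (M0 * C * mu ^ dd m k * b k / b m))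
    with ((M0 * C * M0 * C * (b k / b n)) * (mu ^ dd n m * mu ^ dd m k)) by (field; lra).
  replace (M0 * C * M0 * C * (b k / b n) / mu ^ n * mu ^ m) with ((M0 * C * M0 * C * (b k / b n)) * (mu ^ m / mu ^ n)) by (field; lra).
  apply Rmult_le_compat_l. apply Rmult_le_pos. repeat (apply Rmult_le_pos; try lra). apply Rle_mult_inv_pos; lra.
  pose proof (pow_dd mu n m ltac:(lra)). pose proof (pow_le1 mu (dd m k) ltac:(lra)).
  nra. Qed.

Lemma lim_scal (u : nat -> R) (l c l' : R) : is_lim_seq u l -> l' = c * l -> is_lim_seq (fun N => c * u N) l'.
Proof. intros H ->. apply (is_lim_seq_scal_l u c l H). Qed.

Lemma ident (a b : nat -> R) M0 C mu
  (ha_pos : forall n, 0 < a n) (ha_dec : forall n, a (S n) < a n) (hb_pos : forall n, 0 < b n)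
  (hcv : forall n, ex_finite_lim_seq (pi_pprod a n))
  (hM : forall n, Rabs (pi_seq a n) <= M0) (hmu : 0 < mu < 1) (hC : 0 < C)
  (hphi : forall i j, phi a b i j <= C * mu ^ dd i j) n k :
  is_series (fun m => Pmat a n m * Pmat a m k) (if Nat.eqb n k then 1 else 0).
Proof.
  set (E := fun m => (M0 * C * M0 * C * (b k / b n) / mu ^ n) * mu ^ m).
  assert (HE : ex_series E) by (apply ex_series_geomc; lra).
  assert (HPN : forall N i j, PN a N i j = a j * (2 * pi_pprod a j N) / (a i + a j)).
  { intros. unfold PN, wN. field. pose proof (ha_pos i); pose proof (ha_pos j); lra. }
  set (f := fun N m => if Nat.ltb m N then PN a N n m * PN a N m k else 0).
  set (g := fun m => Pmat a n m * Pmat a m k).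
  assert (Hg : forall m, Rabs (g m) <= E m).
  { intros m. unfold g, Pmat. apply prod_bd; auto. }
  assert (Hf : forall N m, Rabs (f N m) <= E m).
  { intros N m. unfold f. destruct (Nat.ltb m N).
    - rewrite !HPN. apply prod_bd; auto; eapply Rle_trans; try apply pprod_bound; auto.
    - rewrite Rabs_R0. eapply Rle_trans; [apply Rabs_pos|apply (Hg m)]. }
  assert (Hl : forall m, is_lim_seq (fun N => f N m) (g m)).
  { intros m. apply (is_lim_seq_ext_loc (fun N => PN a N n m * PN a N m k)).
    - exists (S m). intros N HN. unfold f. replace (Nat.ltb m N) with true by (symmetry; apply Nat.ltb_lt; lia). reflexivity.
    - unfold g. apply is_lim_seq_mult'.
      + apply (is_lim_seq_ext (fun N => (2 * a m / (a n + a m)) * pi_pprod a m N)).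
        { intros N. rewrite HPN. field. pose proof (ha_pos n); pose proof (ha_pos m); lra. }
        apply (lim_scal _ _ _ _ (pi_lim a m (hcv m))). unfold Pmat. field. pose proof (ha_pos n); pose proof (ha_pos m); lra.
      + apply (is_lim_seq_ext (fun N => (2 * a k / (a m + a k)) * pi_pprod a k N)).
        { intros N. rewrite HPN. field. pose proof (ha_pos k); pose proof (ha_pos m); lra. }
        apply (lim_scal _ _ _ _ (pi_lim a k (hcv k))). unfold Pmat. field. pose proof (ha_pos k); pose proof (ha_pos m); lra. }
  pose proof (dct f g E Hl Hf HE) as HD.
  assert (HD2 : is_lim_seq (fun N => Series (f N)) (Finite (if Nat.eqb n k then 1 else 0))).
  { apply (is_lim_seq_ext_loc (fun _ => if Nat.eqb n k then 1 else 0)); [|apply is_lim_seq_const].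
    exists (S (Nat.max n k)). intros N HN.
    assert (Hs : is_series (f N) (ssum (f N) N)).
    { apply is_series_fin. intros m Hm. unfold f. replace (Nat.ltb m N) with false by (symmetry; apply Nat.ltb_ge; lia). reflexivity. }
    rewrite (is_series_unique _ _ Hs). rewrite <- (finite_id a ha_pos ha_dec N n k) by lia.
    apply ssum_ext. intros m Hm. unfold f. replace (Nat.ltb m N) with true by (symmetry; apply Nat.ltb_lt; lia). reflexivity. }
  pose proof (is_lim_seq_unique _ _ HD) as U1. rewrite (is_lim_seq_unique _ _ HD2) in U1.
  injection U1 as U1. assert (Hs := Series_correct g ltac:(apply (ex_series_bound _ E); auto)).
  rewrite <- U1 in Hs. exact Hs.
Qed.

Lemma is_series_ssum (c : nat -> R) (F : nat -> nat -> R) (s : nat -> R) N :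
  (forall m, is_series (F m) (s m)) ->
  is_series (fun k => ssum (fun m => c m * F m k) N) (ssum (fun m => c m * s m) N).
Proof. intros H. induction N; simpl.
  - exact (is_series_fin (fun _ => 0) 0 (fun _ _ => eq_refl)).
  - exact (is_series_plus _ _ _ _ IHN (is_series_scal_l (c N) (F N) (s N) (H N))). Qed.

Lemma dd_tri n m k : (dd n k <= dd n m + dd m k)%nat.
Proof. unfold dd. lia. Qed.

Lemma mu_nu mu d1 d2 d3 : 0 < mu < 1 -> (d3 <= d1 + d2)%nat ->
  mu ^ d1 * mu ^ d2 <= sqrt mu ^ d1 * sqrt mu ^ d3.
Proof. intros Hmu Hd. pose proof (sqrt_lt_R0 mu ltac:(lra)) as H0.
  pose proof (pow2_sqrt mu ltac:(lra)) as H2.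
  assert (sqrt mu < 1) by nra. set (nu := sqrt mu) in *.
  rewrite <- pow_add, <- pow_add, <- H2, <- !pow_mult. apply pow_anti. lra. lia. Qed.

Lemma part2 (a b y : nat -> R) M0 C mu K
  (ha_pos : forall n, 0 < a n) (ha_dec : forall n, a (S n) < a n) (hb_pos : forall n, 0 < b n)
  (hcv : forall n, ex_finite_lim_seq (pi_pprod a n))
  (hM : forall n, Rabs (pi_seq a n) <= M0) (hmu : 0 < mu < 1) (hC : 0 < C)
  (hphi : forall i j, phi a b i j <= C * mu ^ dd i j)
  (hK : forall k, Rabs (b k * y k) <= K) :
  (forall m, ex_series (fun k => Pmat a m k * y k)) /\
  (forall n, is_series (fun m => Pmat a n m * Pop a y m) (y n)).
Proof.
  assert (hy : forall k, Rabs (y k) <= K / b k).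
  { intros k. pose proof (hb_pos k). specialize (hK k). rewrite Rabs_mult, Rabs_pos_eq in hK by lra.
    apply (Rmult_le_reg_l (b k)); auto. replace (b k * (K / b k)) with K by (field; lra). exact hK. }
  assert (HM0 : 0 <= M0) by (pose proof (Rabs_pos (pi_seq a 0)); pose proof (hM 0%nat); lra).
  assert (HK0 : 0 <= K) by (pose proof (Rabs_pos (b 0%nat * y 0%nat)); pose proof (hK 0%nat); lra).
  assert (Hpb : forall i j, Rabs (Pmat a i j) <= M0 * C * mu ^ dd i j * b j / b i).
  { intros i j. unfold Pmat. apply core_bd; auto. lra. }
  assert (Hpy : forall m k, Rabs (Pmat a m k * y k) <= M0 * C * K / b m * mu ^ dd m k).
  { intros m k. rewrite Rabs_mult. pose proof (hb_pos m). pose proof (hb_pos k).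
    pose proof (pow_lt mu (dd m k) ltac:(lra)).
    eapply Rle_trans. apply Rmult_le_compat; try apply Rabs_pos; [apply Hpb | apply hy].
    right. field. lra. }
  assert (exP : forall m, ex_series (fun k => Pmat a m k * y k)).
  { intros m. apply (ex_series_bound _ (fun k => (M0 * C * K / b m / mu ^ m) * mu ^ k)).
    2: apply ex_series_geomc; lra.
    intros k. eapply Rle_trans. apply Hpy. pose proof (pow_dd mu m k ltac:(lra)).
    pose proof (hb_pos m). pose proof (pow_lt mu m ltac:(lra)).
    assert (0 <= M0 * C * K / b m) by (apply Rle_mult_inv_pos; [repeat apply Rmult_le_pos|]; lra).
    replace (M0 * C * K / b m / mu ^ m * mu ^ k) with (M0 * C * K / b m * (mu ^ k / mu ^ m)) by (field; lra).
    apply Rmult_le_compat_l; auto. }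
  split; [exact exP|]. intros n.
  set (F := fun m k => Pmat a m k * y k).
  assert (Hss : forall N, is_series (fun k => ssum (fun m => Pmat a n m * F m k) N)
                                    (ssum (fun m => Pmat a n m * Pop a y m) N)).
  { intros N. apply is_series_ssum. intros m. apply Series_correct. apply exP. }
  set (f := fun N k => ssum (fun m => Pmat a n m * F m k) N).
  set (g := fun k => (if Nat.eqb n k then 1 else 0) * y k).
  set (nu := sqrt mu).
  assert (Hnu : 0 < nu < 1).
  { unfold nu. pose proof (sqrt_lt_R0 mu ltac:(lra)). pose proof (pow2_sqrt mu ltac:(lra)). nra. }
  set (D := M0 * C * M0 * C * K / (b n * nu ^ n * nu ^ n)).
  assert (HD0 : 0 <= D).
  { unfold D. pose proof (hb_pos n). pose proof (pow_lt nu n ltac:(lra)).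
    apply Rle_mult_inv_pos. repeat apply Rmult_le_pos; lra. repeat apply Rmult_lt_0_compat; lra. }
  set (E := fun k => (D / (1 - nu)) * nu ^ k).
  assert (HE : ex_series E) by (apply ex_series_geomc; lra).
  assert (Hterm : forall m k, Rabs (Pmat a n m * F m k) <= D * nu ^ k * nu ^ m).
  { intros m k. unfold F. rewrite Rabs_mult.
    pose proof (hb_pos n). pose proof (hb_pos m). pose proof (pow_lt nu n ltac:(lra)).
    pose proof (pow_lt mu (dd n m) ltac:(lra)). pose proof (pow_lt mu (dd m k) ltac:(lra)).
    eapply Rle_trans. apply Rmult_le_compat; try apply Rabs_pos; [apply Hpb | apply Hpy].
    replace (M0 * C * mu ^ dd n m * b m / b n * (M0 * C * K / b m * mu ^ dd m k))
      with ((M0 * C * M0 * C * K / b n) * (mu ^ dd n m * mu ^ dd m k)) by (field; lra).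
    pose proof (mu_nu mu (dd n m) (dd m k) (dd n k) hmu (dd_tri n m k)) as Hmn. fold nu in Hmn.
    pose proof (pow_dd nu n m ltac:(lra)). pose proof (pow_dd nu n k ltac:(lra)).
    pose proof (pow_lt nu (dd n m) ltac:(lra)). pose proof (pow_lt nu (dd n k) ltac:(lra)).
    assert (Hmn2 : mu ^ dd n m * mu ^ dd m k <= (nu ^ m / nu ^ n) * (nu ^ k / nu ^ n)).
    { eapply Rle_trans. exact Hmn. apply Rmult_le_compat; lra. }
    replace (D * nu ^ k * nu ^ m) with ((M0 * C * M0 * C * K / b n) * ((nu ^ m / nu ^ n) * (nu ^ k / nu ^ n)))
      by (unfold D; field; lra).
    apply Rmult_le_compat_l; auto. apply Rle_mult_inv_pos; [repeat apply Rmult_le_pos|]; lra. }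
  assert (Hf : forall N k, Rabs (f N k) <= E k).
  { intros N k. unfold f, E. eapply Rle_trans. apply ssum_abs.
    eapply Rle_trans. apply ssum_le. intros m _. apply (Hterm m k).
    pose proof (ssum_geom nu N ltac:(lra)).
    rewrite ssum_scal. pose proof (pow_lt nu k ltac:(lra)).
    replace (D / (1 - nu) * nu ^ k) with ((D * nu ^ k) * / (1 - nu)) by (field; lra).
    apply Rmult_le_compat_l; auto. apply Rmult_le_pos; lra. }
  assert (Hl : forall k, is_lim_seq (fun N => f N k) (g k)).
  { intros k. apply (is_lim_seq_ext (fun N => ssum (fun m => Pmat a n m * Pmat a m k) N * y k)).
    { intros N. unfold f, F. clear. induction N; simpl; [ring|]. rewrite <- IHN. ring. }
    unfold g. apply is_lim_seq_mult'; [|apply is_lim_seq_const].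
    pose proof (ident a b M0 C mu ha_pos ha_dec hb_pos hcv hM hmu hC hphi n k) as HI.
    change (is_lim_seq (sum_n (fun m => Pmat a n m * Pmat a m k)) (Finite (if Nat.eqb n k then 1 else 0))) in HI.
    apply is_lim_seq_incr_1. apply (is_lim_seq_ext _ _ _ (fun K => sum_n_ssum _ K) HI). }
  pose proof (dct f g E Hl Hf HE) as HDC.
  assert (Hg : Series g = y n).
  { rewrite (is_series_unique g (ssum g (S n))).
    - simpl. rewrite (ssum_ext g (fun _ => 0)). rewrite ssum_zero. unfold g. rewrite Nat.eqb_refl. ring.
      intros m Hm. unfold g. replace (Nat.eqb n m) with false by (symmetry; apply Nat.eqb_neq; lia). ring.
    - apply is_series_fin. intros m Hm. unfold g. replace (Nat.eqb n m) with false by (symmetry; apply Nat.eqb_neq; lia). ring. }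
  rewrite Hg in HDC. apply is_lim_seq_incr_1 in HDC.
  change (is_lim_seq (sum_n (fun m => Pmat a n m * Pop a y m)) (y n)).
  apply (is_lim_seq_ext (fun N => Series (f (S N)))); [|exact HDC].
  intros N. rewrite sum_n_ssum. apply is_series_unique. apply Hss.
Qed.

Theorem proposition5 (X : seq_space) (a b : nat -> R)
  (hX : valid_space X)
  (ha_pos : forall n, 0 < a n)
  (ha_dec : forall n, a (S n) < a n)
  (ha_lim : is_lim_seq a 0)
  (hb_pos : forall n, 0 < b n)
  (hb_X : in_space X b)
  (hpi_cv : forall n, ex_finite_lim_seq (pi_pprod a n))
  (hpi_bdd : exists M : R, forall n, Rabs (pi_seq a n) <= M)
  (hphi : exists C mu : R, 0 < C /\ 0 < mu < 1 /\
          forall i j : nat, phi a b i j <= C * mu ^ (Nat.max i j - Nat.min i j)) :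
  forall y : nat -> R, in_Y X b y ->
    (forall n, ex_series (fun m => Pmat a n m * y m)) /\
    (forall n, is_series (fun m => Pmat a n m * Pop a y m) (y n)).
Proof.
  intros y hy.
  destruct hpi_bdd as [M0 hM]. destruct hphi as [C [mu [hC [hmu hphi']]]].
  destruct (in_space_bdd X _ hX hy) as [K [_ hK]].
  exact (part2 a b y M0 C mu K ha_pos ha_dec hb_pos hpi_cv hM hmu hC hphi' hK).
Qed.
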